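(* Let $A\in\mathcal E_n$ with $\operatorname{rk}(A)=r$, and let $A=BCB^T$ with $B\in\mathbb R_+^{n\times r}$ and $C\in\mathbb R_+^{r\times r}$ symmetric. Suppose that the only pair $(X,W)$ satisfying $$X\in\mathbb R_+^{n\times r},\quad W\in\mathbb R_+^{r\times r},\quad W=W^T,\quad X\circ B=0,\quad W\circ C=0,\quad WC=B^TX$$ is $X=0$, $W=0$. Then $A\notin\partial\mathcal E_n$.
   Context: $\mathcal S_n^+$ is the set of $n\times n$ symmetric entrywise nonnegative real matrices; $\mathbb R_+^{p\times q}$ the entrywise nonnegative $p\times q$ real matrices. The SNT-rank $\operatorname{st}_+(A)$ of $A\in\mathcal S_n^+$ is the minimal $k$ such that $A=BCB^T$ with $B\in\mathbb R_+^{n\times k}$ and $C\in\mathcal S_k^+$. $\mathcal E_n=\{A\in\mathcal S_n^+:\operatorname{rk}(A)=\operatorname{st}_+(A)\}$. $\partial\mathcal E_n$ is the set of $A\in\mathcal E_n$ such that $A-\alpha uu^T\notin\mathcal E_n$ for every $\alpha>0$, where $u$ is the Perron eigenvector of $A$ (an entrywise nonnegative unit eigenvector for the spectral radius of $A$). $X\circ B$ denotes the entrywise (Hadamard) product. *)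

(* Defs.v *)
From HB Require Import structures.
From mathcomp Require Import all_boot all_order all_algebra.
From mathcomp Require Import reals.
Set Implicit Arguments. Unset Strict Implicit. Unset Printing Implicit Defensive.
Import Order.TTheory GRing.Theory Num.Theory.
Local Open Scope ring_scope.

Section Defs.
Variable R : realType.

Definition nonneg_mx (p q : nat) (M : 'M[R]_(p, q)) : Prop :=
  forall i j, 0 <= M i j.

Definition sym_mx (k : nat) (M : 'M[R]_k) : Prop := M^T = M.

Definition SnPlus (n : nat) (A : 'M[R]_n) : Prop := sym_mx A /\ nonneg_mx A.

Definition hadamard (p q : nat) (X Y : 'M[R]_(p, q)) : 'M[R]_(p, q) :=
  \matrix_(i, j) (X i j * Y i j).

Definition snt_factorizable (n k : nat) (A : 'M[R]_n) : Prop :=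
  exists (B : 'M[R]_(n, k)) (C : 'M[R]_k),
    nonneg_mx B /\ SnPlus C /\ A = B *m C *m B^T.

Definition is_snt_rank (n : nat) (A : 'M[R]_n) (k : nat) : Prop :=
  snt_factorizable k A /\ (forall k', snt_factorizable k' A -> (k <= k')%N).

Definition in_E (n : nat) (A : 'M[R]_n) : Prop :=
  SnPlus A /\ is_snt_rank A (\rank A).

(* rho is the spectral radius of A: the largest modulus of an eigenvalue
   (A is symmetric real in our use, so all eigenvalues are real) *)
Definition is_spectral_radius (n : nat) (A : 'M[R]_n) (rho : R) : Prop :=
  (exists lam, eigenvalue A lam /\ `|lam| = rho) /\
  (forall lam, eigenvalue A lam -> `|lam| <= rho).

Definition perron_vector (n : nat) (A : 'M[R]_n) (u : 'cV[R]_n) : Prop :=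
  nonneg_mx u /\ \sum_i (u i 0) ^+ 2 = 1 /\
  exists rho, is_spectral_radius A rho /\ A *m u = rho *: u.

Definition in_boundaryE (n : nat) (A : 'M[R]_n) : Prop :=
  in_E A /\
  exists u : 'cV[R]_n, perron_vector A u /\
    forall alpha : R, 0 < alpha -> ~ in_E (A - alpha *: (u *m u^T)).

End Defs.

(* Main.v *)
Require Import Defs.
From HB Require Import structures.
From mathcomp Require Import all_boot all_order all_algebra.
From mathcomp Require Import reals.
From mathcomp Require Import ring lra.
Import Order.TTheory GRing.Theory Num.Theory.
Local Open Scope ring_scope.

Lemma gordan (R : realFieldType) (m : nat) : forall (I : finType) (P : pred I)
  (a : I -> 'I_m -> R),
  (exists x : 'I_m -> R, forall i, P i -> 0 < \sum_j a i j * x j) \/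
  (exists y : I -> R, (forall i, 0 <= y i) /\ (forall i, ~~ P i -> y i = 0) /\
     (exists i, y i != 0) /\ forall j, \sum_i y i * a i j = 0).
Proof.
elim: m => [|m IH] I P a.
  case: (boolP [exists i, P i]) => [/existsP [i Pi]|nP].
    right; exists (fun k => (k == i)%:R); split; first by move=> k; apply: ler0n.
    split; first by move=> k Pk; case: eqP => // Ek; rewrite Ek Pi in Pk.
    by split; [exists i; rewrite eqxx oner_eq0 | case].
  left; exists (fun _ => 0) => i Pi; case/negP: nP; apply/existsP; by exists i.
pose s i := a i ord0.
pose a' i (j : 'I_m) := a i (lift ord0 j).
pose P' (i' : (I + I * I)%type) := match i' with
  | inl i => P i && (s i == 0)
  | inr p => [&& P p.1, P p.2, 0 < s p.1 & s p.2 < 0] end.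
pose a'' (i' : (I + I * I)%type) (j : 'I_m) := match i' with
  | inl i => a' i j
  | inr p => - s p.2 * a' p.1 j + s p.1 * a' p.2 j end.
have Hsum : forall i (x : 'I_m.+1 -> R),
  \sum_j a i j * x j = s i * x ord0 + \sum_j a' i j * x (lift ord0 j).
  by move=> i x; rewrite big_ord_recl.
case: (IH _ P' a'') => [[x' Hx'] | [y' [y'0 [y'P [[i0 i0nz] y'eq]]]]].
- left.
  pose v i := \sum_j a' i j * x' j.
  have Hz : forall i, P i -> s i = 0 -> 0 < v i.
    by move=> i Pi si; have := Hx' (inl i); rewrite /= Pi si eqxx; apply.
  have Hp : forall j k, P j -> P k -> 0 < s j -> s k < 0 ->
      0 < - s k * v j + s j * v k.
    move=> j k Pj Pk sj sk; have := Hx' (inr (j, k)); rewrite /= Pj Pk sj sk.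
    move=> /(_ isT); congr (0 < _).
    rewrite /v !mulr_sumr -big_split /=; apply: eq_bigr => t _; ring.
  pose L i := - v i / s i.
  pose U i := v i / (- s i).
  pose M := 1 + \sum_i `|v i / s i|.
  have HM : forall i, `|v i / s i| < M.
    move=> i; rewrite /M (bigD1 i) //=.
    have : 0 <= \sum_(k | k != i) `|v k / s k|.
      by apply: sumr_ge0 => k _; exact: normr_ge0.
    lra.
  have HM0 : 0 < M.
    rewrite /M; have : 0 <= \sum_i `|v i / s i|.
      by apply: sumr_ge0 => k _; exact: normr_ge0.
    lra.
  have HL : forall i, - M < L i < M.
    move=> i; have := HM i; rewrite /L mulNr ltr_norml; case/andP=> h1 h2.
    by apply/andP; split; rewrite ?ltrN2 // ltrNl.
  have HU : forall i, - M < U i < M.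
    move=> i; have := HM i; rewrite /U invrN mulrN ltr_norml; case/andP=> h1 h2.
    by apply/andP; split; rewrite ?ltrN2 // ltrNl.
  have HLU : forall j k, P j -> P k -> 0 < s j -> s k < 0 -> L j < U k.
    move=> j k Pj Pk sj sk; have := Hp j k Pj Pk sj sk.
    have sk' : 0 < - s k by rewrite oppr_gt0.
    rewrite /L /U ltr_pdivrMr // mulrAC ltr_pdivlMr // => h.
    nra.
  pose lo := \big[Order.max/ - M]_(i | P i && (0 < s i)) L i.
  pose hi := \big[Order.min/ M]_(i | P i && (s i < 0)) U i.
  have Hlohi : lo < hi.
    apply: bigmax_lt.
      apply: lt_bigmin; first by lra.
      by move=> k /andP[_ _]; case/andP: (HU k).
    move=> j /andP[Pj sj]; apply: lt_bigmin; first by case/andP: (HL j).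
    by move=> k /andP[Pk sk]; apply: HLU.
  pose t := (lo + hi) / 2.
  have Hlot : lo < t by rewrite /t; lra.
  have Hthi : t < hi by rewrite /t; lra.
  exists (fun j => if unlift ord0 j is Some j' then x' j' else t).
  move=> i Pi; rewrite Hsum unlift_none.
  under eq_bigr do rewrite liftK.
  rewrite -/(v i).
  case: (ltrgt0P (s i)) => si.
  - have : L i < t.
      apply: le_lt_trans Hlot; apply: le_bigmax_cond; by rewrite Pi si.
    rewrite /L ltr_pdivrMr //; nra.
  - have : t < U i.
      have h : hi <= U i by apply: bigmin_le_cond; rewrite Pi si.
      exact: lt_le_trans Hthi h.
    have si' : 0 < - s i by rewrite oppr_gt0.
    rewrite /U ltr_pdivlMr //; nra.
  - by rewrite si mul0r add0r; apply: Hz.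
- right.
  pose y i := y' (inl i) + \sum_k y' (inr (i, k)) * (- s k)
                        + \sum_j y' (inr (j, i)) * s j.
  have HP' : forall i', y' i' != 0 -> P' i'.
    by move=> i' h; apply/negPn/negP=> /y'P e; rewrite e eqxx in h.
  have Hnn1 : forall j k, 0 <= y' (inr (j, k)) * (- s k).
    move=> j k; case: (eqVneq (y' (inr (j, k))) 0) => [->|h]; first by rewrite mul0r.
    have /= /and4P[_ _ _ sk] := HP' _ h.
    by apply: mulr_ge0 => //; rewrite oppr_ge0 ltW.
  have Hnn2 : forall j k, 0 <= y' (inr (j, k)) * s j.
    move=> j k; case: (eqVneq (y' (inr (j, k))) 0) => [->|h]; first by rewrite mul0r.
    have /= /and4P[_ _ sj _] := HP' _ h.
    by apply: mulr_ge0 => //; rewrite ltW.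
  have Hs1 : forall i, 0 <= \sum_k y' (inr (i, k)) * (- s k).
    by move=> i; apply: sumr_ge0 => k _; apply: Hnn1.
  have Hs2 : forall i, 0 <= \sum_j y' (inr (j, i)) * s j.
    by move=> i; apply: sumr_ge0 => k _; apply: Hnn2.
  have Hid : forall g : I -> R, \sum_i y i * g i =
      \sum_i y' (inl i) * g i +
      \sum_p y' (inr p) * (- s p.2 * g p.1 + s p.1 * g p.2).
    move=> g; rewrite /y.
    under eq_bigr do rewrite !mulrDl.
    rewrite !big_split /= -addrA; congr (_ + _).
    under [in RHS]eq_bigr do rewrite mulrDr.
    rewrite big_split /=; congr (_ + _).
      transitivity (\sum_i \sum_k y' (inr (i, k)) * (- s k * g i));
        last by rewrite pair_bigA; apply: eq_bigr => -[? ?] _.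
      apply: eq_bigr => i _; rewrite mulr_suml; apply: eq_bigr => k _; ring.
    transitivity (\sum_i \sum_k y' (inr (i, k)) * (s i * g k));
      last by rewrite pair_bigA; apply: eq_bigr => -[? ?] _.
    rewrite exchange_big /=; apply: eq_bigr => i _; rewrite mulr_suml.
    apply: eq_bigr => k _; ring.
  exists y; split.
    move=> i; rewrite /y; apply: addr_ge0; first apply: addr_ge0.
    - exact: y'0.
    - exact: Hs1.
    - exact: Hs2.
  split.
    move=> i nPi; rewrite /y y'P; last by rewrite /= (negbTE nPi).
    rewrite !big1 ?addr0 // => k _; rewrite y'P ?mul0r //= (negbTE nPi) //.
    by rewrite andbF.
  split.
    case: i0 i0nz => [i|[j k]] h.
      exists i; rewrite gt_eqF // /y -addrA ltr_pwDl //; last exact: addr_ge0.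
      by rewrite lt0r h y'0.
    exists j; rewrite gt_eqF // /y -addrA ltr_wpDl //.
    apply: ltr_wpDr => //; rewrite (bigD1 k) //= ltr_wpDr //.
      by apply: sumr_ge0 => l _; apply: Hnn1.
    have /= /and4P[_ _ _ sk] := HP' _ h.
    by rewrite mulr_gt0 // ?oppr_gt0 // lt0r h y'0.
  move=> j; case: (unliftP ord0 j) => [j'|] ->.
    transitivity (\sum_i y i * a' i j'); first by [].
    by rewrite Hid; move: (y'eq j'); rewrite big_sumType.
  transitivity (\sum_i y i * s i); first by [].
  rewrite Hid big1 ?add0r; last first.
    move=> i _; case: (eqVneq (y' (inl i)) 0) => [->|h]; first by rewrite mul0r.
    by have /= /andP[_ /eqP ->] := HP' _ h; rewrite mulr0.
  by rewrite big1 // => p _; rewrite mulrC mulNr (mulrC (s p.1)) addNr mul0r.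
Qed.

Lemma gordanJ {R : realFieldType} {I J : finType} (P : pred I) (a : I -> J -> R) :
  (exists x : J -> R, forall i, P i -> 0 < \sum_j a i j * x j) \/
  (exists y : I -> R, (forall i, 0 <= y i) /\ (forall i, ~~ P i -> y i = 0) /\
     (exists i, y i != 0) /\ forall j, \sum_i y i * a i j = 0).
Proof.
case: (@gordan R #|J| I P (fun i k => a i (enum_val k))) => [[x Hx]|[y [y0 [yP [ynz Hy]]]]].
  left; exists (fun j => x (enum_rank j)) => i Pi; have h := Hx i Pi.
  rewrite (reindex (@enum_val J predT)) /=; last exact: onW_bij (@enum_val_bij J).
  by under eq_bigr do rewrite enum_valK.
right; exists y; do 3 split => //.
by move=> j; have := Hy (enum_rank j); rewrite enum_rankK.
Qed.

Definition ev {R : realFieldType} (Q : R -> Prop) :=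
  exists2 d : R, 0 < d & forall e, 0 < e -> e < d -> Q e.

Lemma ev_and {R : realFieldType} {Q1 Q2 : R -> Prop} :
  ev Q1 -> ev Q2 -> ev (fun e => Q1 e /\ Q2 e).
Proof.
move=> [d1 d10 H1] [d2 d20 H2]; exists (Order.min d1 d2).
  by rewrite lt_min d10 d20.
by move=> e e0; rewrite lt_min => /andP[h1 h2]; split; [apply: H1|apply: H2].
Qed.

Lemma ev_lt {R : realFieldType} {c : R} : 0 < c -> ev (fun e => e < c).
Proof. by move=> c0; exists c. Qed.

Lemma ev_impl {R : realFieldType} {Q1 Q2 : R -> Prop} :
  ev Q1 -> (forall e, 0 < e -> Q1 e -> Q2 e) -> ev Q2.
Proof. by move=> [d d0 H] HQ; exists d => // e e0 ed; apply: HQ => //; apply: H. Qed.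

Lemma ev_seq {R : realFieldType} (T : eqType) (s : seq T) (Q : T -> R -> Prop) :
  (forall t, t \in s -> ev (Q t)) -> ev (fun e => forall t, t \in s -> Q t e).
Proof.
elim: s => [|t s IH] H; first by exists 1 => // e _ _ t.
have [d d0 Hd] := ev_and (H t (mem_head t s))
   (IH (fun t' h => H t' (@mem_behead T (t :: s) t' h))).
exists d => // e e0 ed t'; rewrite inE => /orP[/eqP ->|h].
  by case: (Hd e e0 ed).
by case: (Hd e e0 ed) => _; apply.
Qed.

Lemma ev_fin {R : realFieldType} (I : finType) (Q : I -> R -> Prop) :
  (forall i, ev (Q i)) -> ev (fun e => forall i, Q i e).
Proof.
move=> H; have [d d0 Hd] := @ev_seq R I (enum I) Q (fun t _ => H t).
by exists d => // e e0 ed i; apply: Hd => //; rewrite mem_enum.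
Qed.

Lemma ev_pos {R : realFieldType} (a0 a1 K d0 : R) (f : R -> R) :
  0 < d0 -> (0 < a0 \/ (a0 = 0 /\ 0 < a1)) ->
  (forall e, 0 < e -> e < d0 -> `|f e - (a0 + a1 * e)| <= K * e ^+ 2) ->
  ev (fun e => 0 < f e).
Proof.
move=> d00 Ha Hf.
pose K' := `|K| + `|a1| + 1.
have K'0 : 0 < K' by rewrite /K'; have := normr_ge0 K; have := normr_ge0 a1; lra.
have HK : K <= `|K| by exact: ler_norm.
have Ha1 : - `|a1| <= a1 by rewrite lerNl; rewrite -normrN; exact: ler_norm.
case: Ha => [a00|[a0E a10]]; last rewrite a0E in Hf.
  have := ev_and (ev_and (ev_lt d00) (ev_lt ltr01))
                  (ev_lt (divr_gt0 a00 (mulr_gt0 (ltr0n _ 2) K'0))).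
  move=> Hev; apply: (ev_impl Hev) => e e0 [[ed e1] ea].
  have := Hf e e0 ed; rewrite ler_norml => /andP[h1 _].
  move: ea; rewrite ltr_pdivlMr ?mulr_gt0 ?ltr0n // => ea.
  have e2 : e ^+ 2 <= e by rewrite expr2 ger_pMr // ltW.
  have hK : K * e ^+ 2 <= `|K| * e.
    apply: le_trans (_ : `|K| * e ^+ 2 <= _).
      by apply: ler_wpM2r => //; apply: exprn_ge0; exact: ltW.
    by apply: ler_wpM2l => //; exact: normr_ge0.
  have ha : - `|a1| * e <= a1 * e by apply: ler_wpM2r => //; exact: ltW.
  rewrite /K' in ea; nra.
have := ev_and (ev_lt d00) (ev_lt (divr_gt0 a10 K'0)).
move=> Hev; apply: (ev_impl Hev) => e e0 [ed ea].
have := Hf e e0 ed; rewrite ler_norml add0r => /andP[h1 _].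
move: ea; rewrite ltr_pdivlMr // => ea.
have hK : K * e ^+ 2 <= `|K| * e ^+ 2.
  by apply: ler_wpM2r => //; apply: exprn_ge0; exact: ltW.
have eK : e * K' = e * `|K| + e * `|a1| + e by rewrite /K'; ring.
have ea1 : 0 <= e * `|a1| by rewrite mulr_ge0 ?normr_ge0 // ltW.
have hp : 0 < e * (a1 - `|K| * e).
  by apply: mulr_gt0 => //; rewrite subr_gt0; lra.
have hp' : e * (a1 - `|K| * e) = a1 * e - `|K| * e ^+ 2 by rewrite expr2; ring.
lra.
Qed.

Section MB.
Variable R : realFieldType.
Variable r : nat.
Variable H : 'M[R]_r.
Let S := \sum_i \sum_j `|H i j|.

Lemma row_le_S i : \sum_k `|H i k| <= S.
Proof.
rewrite /S [X in _ <= X](bigD1 i) //= lerDl.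
by apply: sumr_ge0 => l _; apply: sumr_ge0 => k _; exact: normr_ge0.
Qed.

Lemma S_ge0 : 0 <= S.
Proof. by apply: sumr_ge0 => l _; apply: sumr_ge0 => k _; exact: normr_ge0. Qed.

Lemma sum_bound i (v : 'I_r -> R) m : 0 <= m -> (forall k, `|v k| <= m) ->
  `|\sum_k H i k * v k| <= S * m.
Proof.
move=> m0 hv; apply: le_trans (ler_norm_sum _ _ _) _.
apply: le_trans (_ : \sum_k `|H i k| * m <= _).
  apply: ler_sum => k _; rewrite normrM; apply: ler_wpM2l => //; exact: normr_ge0.
by rewrite -mulr_suml; apply: ler_wpM2r => //; apply: row_le_S.
Qed.

Lemma sum_bound_l i (v : 'I_r -> R) m : 0 <= m -> (forall k, `|v k| <= m) ->
  `|\sum_k v k * H k i| <= S * m.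
Proof.
move=> m0 hv; apply: le_trans (ler_norm_sum _ _ _) _.
apply: le_trans (_ : \sum_k `|H k i| * m <= _).
  apply: ler_sum => k _; rewrite normrM mulrC; apply: ler_wpM2l => //; exact: normr_ge0.
rewrite -mulr_suml; apply: ler_wpM2r => //.
apply: le_trans (_ : \sum_k \sum_j `|H k j| <= _) => //.
by apply: ler_sum => k _; rewrite (bigD1 i) //= lerDl; apply: sumr_ge0 => *; exact: normr_ge0.
Qed.

Lemma inv_unit (e : R) : 0 <= e -> e * S <= 1 / 2 -> (1%:M - e *: H) \in unitmx.
Proof.
move=> e0 eS; rewrite -row_free_unit -kermx_eq0; apply/negPn/negP => nz.
set F := 1%:M - e *: H in nz *; set K := kermx F in nz *.
have [i [j nzij]] : exists i j, K i j != 0.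
  case: (boolP [exists i, [exists j, K i j != 0]]) => [/existsP[i /existsP[j h]]|h].
    by exists i, j.
  case/negP: nz; apply/eqP/matrixP => a b.
  have -> : (0 : 'M[R]_r) a b = 0 by rewrite mxE.
  apply/eqP; apply: contraNT h => h'; apply/existsP; exists a; apply/existsP; exists b.
  by [].
have vF : row i K *m F = 0 by rewrite -row_mul mulmx_ker row0.
have vF' : row i K = e *: (row i K *m H).
  by apply: subr0_eq; rewrite -vF /F mulmxBr mulmx1 scalemxAr.
pose m := \big[Order.max/0]_k `|K i k|.
have hv : forall k, `|K i k| <= m.
  by move=> k; apply: (le_bigmax_cond _ (P := xpredT)).
have m0 : 0 <= m by apply: le_trans (hv j); exact: normr_ge0.
have hb : forall b, `|K i b| <= m / 2.
  move=> b; have := congr1 (fun M : 'rV[R]_r => M 0 b) vF'; rewrite !mxE => ->.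
  rewrite normrM ger0_norm //.
  have := @sum_bound_l b (fun k => K i k) m m0.
  have E : \sum_k K i k * H k b = \sum_k row i K 0 k * H k b.
    by apply: eq_bigr => k _; rewrite [in RHS]mxE.
  rewrite -E => /(_ (fun k => hv k)) h.
  apply: le_trans (_ : e * (S * m) <= _); first by apply: ler_wpM2l.
  have := S_ge0; nra.
have : m <= m / 2 by apply: bigmax_le => //; lra.
have := hv j; have := normr_gt0 (K i j); rewrite nzij; lra.
Qed.

Lemma inv_bound (e : R) : 0 <= e -> e * S <= 1 / 2 ->
  forall a b, `|invmx (1%:M - e *: H) a b| <= 2.
Proof.
move=> e0 eS; have U := @inv_unit e e0 eS.
set F := 1%:M - e *: H in U *; set G := invmx F.
have FG : F *m G = 1%:M by rewrite mulmxV.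
have GE : G = 1%:M + e *: (H *m G).
  have h : G - e *: (H *m G) = 1%:M by rewrite -FG /F mulmxBl mul1mx scalemxAl.
  by rewrite -h subrK.
pose m := \big[Order.max/0]_(p : 'I_r * 'I_r) `|G p.1 p.2|.
have hv : forall a b, `|G a b| <= m.
  by move=> a b; apply: (le_bigmax_cond _ (P := xpredT) (fun p : 'I_r * 'I_r => `|G p.1 p.2|) (j := (a, b))).
have m0 : 0 <= m.
  apply: (big_ind (fun x : R => 0 <= x)); [by [] | | by move=> p _; exact: normr_ge0].
  by move=> x y hx _; rewrite le_max hx.
have hb : forall a b, `|G a b| <= 1 + m / 2.
  move=> a b; rewrite {1}GE !mxE.
  apply: le_trans (ler_normD _ _) _.
  have h1 : `|(a == b)%:R : R| <= 1 by case: eqP; rewrite ?normr0 ?normr1.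
  have := @sum_bound a (fun k => G k b) m m0 (fun k => hv k b).
  rewrite normrM ger0_norm // => h2.
  have : e * `|\sum_k H a k * G k b| <= e * (S * m) by apply: ler_wpM2l.
  have := S_ge0; nra.
have : m <= 1 + m / 2.
  apply: bigmax_le => //; first lra.
move=> hm a b; apply: le_trans (hv a b) _; lra.
Qed.
End MB.

Lemma C'_exp (R : realFieldType) r (H C P : 'M[R]_r) (e : R) :
  (1%:M - e *: H) *m (C - e ^+ 2 *: P) *m (1%:M - e *: H)^T =
  C + e *: (- (H *m C + C *m H^T)) +
  e ^+ 2 *: ((H *m C *m H^T - P) + e *: (H *m P + P *m H^T) +
             e ^+ 2 *: (- (H *m P *m H^T))).
Proof.
rewrite [(1%:M - e *: H)^T]linearB /= trmx1 [(e *: H)^T]linearZ /=.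
do 3 rewrite ?mulmxBl ?mulmxBr ?mul1mx ?mulmx1 -?scalemxAl -?scalemxAr ?mulmxA.
move: (H *m C *m H^T) (H *m P *m H^T) => HCH HPH.
move: (H *m C) (H *m P) (C *m H^T) (P *m H^T) => HC HP CH PH.
apply/matrixP => a b; rewrite !mxE; ring.
Qed.

Lemma inv_GE (R : realFieldType) r (H : 'M[R]_r) (e : R) :
  (1%:M - e *: H) \in unitmx ->
  invmx (1%:M - e *: H) = 1%:M + e *: (H *m invmx (1%:M - e *: H)).
Proof.
move=> U; set G := invmx _.
have FG : (1%:M - e *: H) *m G = 1%:M by rewrite mulmxV.
have h : G - e *: (H *m G) = 1%:M by rewrite -FG mulmxBl mul1mx scalemxAl.
by rewrite -h subrK.
Qed.

Lemma B'_exp (R : realFieldType) n r (B : 'M[R]_(n, r)) (H G : 'M[R]_r) (e : R) :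
  G = 1%:M + e *: (H *m G) ->
  B *m G = B + e *: (B *m H) + e ^+ 2 *: (B *m H *m H *m G).
Proof.
move=> GE.
have h1 : H *m G = H + e *: (H *m H *m G).
  by rewrite {1}GE mulmxDr mulmx1 -scalemxAr mulmxA.
rewrite {1}GE mulmxDr mulmx1 -scalemxAr h1 mulmxDr -scalemxAr scalerDr scalerA.
by rewrite -expr2 addrA !mulmxA.
Qed.

Lemma sum_pair {R : realFieldType} {I J : finType} (F : I * J -> R) :
  \sum_j F j = \sum_p \sum_q F (p, q).
Proof. by rewrite pair_bigA; apply: eq_bigr => -[]. Qed.

Lemma sum_if_eq {R : realFieldType} {I : finType} (k : I) (F : I -> R) :
  \sum_q (if q == k then F q else 0) = F k.
Proof.
by rewrite (bigD1 k) //= eqxx big1 ?addr0 // => q /negbTE ->.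
Qed.

Lemma sum_if_eq_mul {R : realFieldType} {I : finType} (k : I) (F G : I -> R) :
  \sum_q (if q == k then F q else 0) * G q = F k * G k.
Proof.
rewrite -(sum_if_eq k (fun q => F q * G q)); apply: eq_bigr => q _.
by case: eqP => _; rewrite ?mul0r.
Qed.

Lemma sum_if_eq_mulc {R : realFieldType} {I : finType} (k : I) (c : R) (G : I -> R) :
  \sum_q (if q == k then c else 0) * G q = c * G k.
Proof. exact: (sum_if_eq_mul k (fun _ => c)). Qed.

Lemma sum_if_outer {R : realFieldType} {I J : finType} (k : I) (F G : I -> J -> R) :
  \sum_p \sum_q (if p == k then F p q else 0) * G p q = \sum_q F k q * G k q.
Proof.
rewrite -(sum_if_eq k (fun p => \sum_q F p q * G p q)); apply: eq_bigr => p _.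
by case: eqP => _ //; rewrite big1 // => q _; rewrite mul0r.
Qed.

Lemma gordan_app (R : realType) n r (B : 'M[R]_(n, r)) (C : 'M[R]_r) :
  nonneg_mx B -> nonneg_mx C -> C^T = C ->
  (forall (X : 'M[R]_(n, r)) (W : 'M[R]_r),
      nonneg_mx X -> nonneg_mx W -> W^T = W ->
      hadamard X B = 0 -> hadamard W C = 0 -> W *m C = B^T *m X ->
      X = 0 /\ W = 0) ->
  exists H : 'M[R]_r,
    (forall i k, B i k = 0 -> 0 < (B *m H) i k) /\
    (forall k l, C k l = 0 -> 0 < - (H *m C + C *m H^T) k l).
Proof.
move=> B0 C0 Csym Hyp.
pose P (i' : (('I_n * 'I_r) + ('I_r * 'I_r))%type) := match i' with
  | inl p => B p.1 p.2 == 0 | inr q => C q.1 q.2 == 0 end.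
pose a (i' : (('I_n * 'I_r) + ('I_r * 'I_r))%type) (j : ('I_r * 'I_r)%type) :=
  match i' with
  | inl p => if j.2 == p.2 then B p.1 j.1 else 0
  | inr q => - ((if j.1 == q.1 then C j.2 q.2 else 0) +
                (if j.1 == q.2 then C q.1 j.2 else 0)) end.
have HC' : forall k l, C l k = C k l.
  by move=> k l; rewrite -{2}Csym mxE.
case: (gordanJ P a) => [[x Hx]|[y [y0 [yP [[i0 i0nz] Hy]]]]].
  exists (\matrix_(p, q) x (p, q)); split.
    move=> i k Bik; have := Hx (inl (i, k)); rewrite /= Bik eqxx => /(_ isT).
    rewrite sum_pair mxE; congr (0 < _); apply: eq_bigr => p _.
    by rewrite sum_if_eq_mul mxE.
  move=> k l Ckl; have := Hx (inr (k, l)); rewrite /= Ckl eqxx => /(_ isT).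
  rewrite sum_pair !mxE; congr (0 < _).
  transitivity (- (\sum_p \sum_q (if p == k then C q l else 0) * x (p, q) +
     \sum_p \sum_q (if p == l then C k q else 0) * x (p, q))).
    rewrite -big_split /= -sumrN; apply: eq_bigr => p _.
    rewrite -big_split -sumrN /=; apply: eq_bigr => q _; by rewrite mulNr mulrDl.
  rewrite !sum_if_outer; congr (- (_ + _)); apply: eq_bigr => q _; rewrite !mxE //.
  exact: mulrC.
pose X : 'M[R]_(n, r) := \matrix_(i, k) y (inl (i, k)).
pose Y : 'M[R]_r := \matrix_(k, l) y (inr (k, l)).
pose W := Y + Y^T.
have yB : forall i k, B i k != 0 -> y (inl (i, k)) = 0.
  by move=> i k h; apply: (yP (inl (i, k))).
have yC : forall k l, C k l != 0 -> y (inr (k, l)) = 0.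
  by move=> k l h; apply: (yP (inr (k, l))).
have [HX HW] : X = 0 /\ W = 0.
  apply: Hyp.
  - by move=> i k; rewrite mxE.
  - by move=> k l; rewrite !mxE addr_ge0.
  - by rewrite /W linearD /= trmxK addrC.
  - apply/matrixP => i k; rewrite !mxE; case: (eqVneq (B i k) 0) => [->|h].
      by rewrite mulr0.
    by rewrite yB ?mul0r.
  - apply/matrixP => k l; rewrite !mxE; case: (eqVneq (C k l) 0) => [->|h].
      by rewrite mulr0.
    by rewrite yC // yC ?addr0 ?mul0r // HC'.
  - apply/matrixP => p q; have := Hy (p, q); rewrite big_sumType /= !sum_pair.
    have E1 : \sum_i \sum_k y (inl (i, k)) * (if q == k then B i p else 0) =
              (B^T *m X) p q.
      rewrite !mxE; apply: eq_bigr => i _; rewrite (bigD1 q) //= eqxx big1.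
        by rewrite addr0 !mxE mulrC.
      by move=> k /negbTE; rewrite eq_sym => ->; rewrite mulr0.
    have E2 : \sum_k \sum_l y (inr (k, l)) * - ((if p == k then C q l else 0) +
                 (if p == l then C k q else 0)) = - (W *m C) p q.
      transitivity (- (\sum_k \sum_l (if k == p then C q l else 0) * y (inr (k, l)) +
         \sum_k \sum_l (if l == p then C k q else 0) * y (inr (k, l)))).
        rewrite -big_split /= -sumrN; apply: eq_bigr => k _.
        rewrite -big_split -sumrN /=; apply: eq_bigr => l _.
        by rewrite (eq_sym k) (eq_sym l) mulrN mulrDr mulrC (mulrC _ (if _ then _ else _)).
      rewrite sum_if_outer.
      rewrite [X in _ + X](eq_bigr (fun k => C k q * y (inr (k, p)))); last first.
        by move=> k _; exact: (sum_if_eq_mulc p (C k q) (fun l => y (inr (k, l)))).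
      rewrite !mxE -big_split /=; congr (- _); apply: eq_bigr => m _.
      by rewrite !mxE mulrDl HC' (mulrC (C _ _)) (mulrC (C _ _)).
    by rewrite E1 E2 => /eqP; rewrite subr_eq0 => /eqP ->.
exfalso; case: i0 i0nz => [[i k]|[k l]] /eqP; apply.
  by have := congr1 (fun M : 'M[R]_(n, r) => M i k) HX; rewrite !mxE => ->.
have := congr1 (fun M : 'M[R]_r => M k l) HW; rewrite !mxE => /eqP.
by rewrite paddr_eq0 ?y0 // => /andP[/eqP -> _].
Qed.

Lemma nn_mul (R : realType) m k p (X : 'M[R]_(m, k)) (Y : 'M[R]_(k, p)) :
  nonneg_mx X -> nonneg_mx Y -> nonneg_mx (X *m Y).
Proof. by move=> hX hY a b; rewrite mxE; apply: sumr_ge0 => c _; apply: mulr_ge0. Qed.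

Lemma nn_tr (R : realType) m k (X : 'M[R]_(m, k)) :
  nonneg_mx X -> nonneg_mx X^T.
Proof. by move=> hX a b; rewrite mxE. Qed.

Theorem mainTheorem13 (R : realType) (n r : nat) (A : 'M[R]_n)
  (B : 'M[R]_(n, r)) (C : 'M[R]_r) :
  in_E A -> \rank A = r -> A != 0 ->
  nonneg_mx B -> nonneg_mx C -> C^T = C -> A = B *m C *m B^T ->
  (forall (X : 'M[R]_(n, r)) (W : 'M[R]_r),
      nonneg_mx X -> nonneg_mx W -> W^T = W ->
      hadamard X B = 0 -> hadamard W C = 0 -> W *m C = B^T *m X ->
      X = 0 /\ W = 0) ->
  ~ in_boundaryE A.
Proof.
move=> [SA HrA] rkA A0 B0 C0 Csym AE Hyp
  [_ [u [[u0 [u1 [rho [[[lam [evl lamE]] Hsr] Au]]]] Hbd]]].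
have r0 : (0 < r)%N by rewrite -rkA lt0n mxrank_eq0.
have Asym : A^T = A := SA.1.
have Anng : nonneg_mx A := SA.2.
have HC' : forall k l, C l k = C k l by move=> k l; rewrite -{2}Csym mxE.
have Brow : forall i, exists k, B i k != 0.
  move=> i; case: (boolP [exists k, B i k != 0]) => [/existsP[k h]|h].
    by exists k.
  exfalso; pose k0 := Ordinal r0.
  have Bi : forall k, B i k = 0.
    by move=> k; apply/eqP; apply: contraNT h => h'; apply/existsP; exists k.
  have [HX _] : (delta_mx i k0 : 'M[R]_(n, r)) = 0 /\ (0 : 'M[R]_r) = 0.
    apply: (Hyp (delta_mx i k0) 0).
    - by move=> a b; rewrite mxE; apply: ler0n.
    - by move=> a b; rewrite mxE.
    - by rewrite trmx0.
    - apply/matrixP => a b; rewrite !mxE; case: (eqVneq a i) => [->|h'].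
        by rewrite Bi mulr0.
      by rewrite mul0r.
    - by apply/matrixP => a b; rewrite !mxE mul0r.
    - rewrite mul0mx; apply/matrixP => a b; rewrite !mxE; symmetry.
      apply: big1 => c _; rewrite !mxE; case: (eqVneq c i) => [->|h'].
        by rewrite Bi mul0r.
      by rewrite mulr0.
  have := congr1 (fun M : 'M[R]_(n, r) => M i k0) HX; rewrite !mxE !eqxx /=.
  by move/eqP; rewrite oner_eq0.
have rho0 : 0 <= rho by rewrite -lamE normr_ge0.
set BC := B *m C.
have BC0 : nonneg_mx BC.
  by move=> a b; rewrite /BC mxE; apply: sumr_ge0 => c _; apply: mulr_ge0.
have rhonz : rho != 0.
  apply/eqP => rhoE.
  have Au0 : A *m u = 0 by rewrite Au rhoE scale0r.
  have [j uj] : exists j, u j 0 != 0.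
    case: (boolP [exists j, u j 0 != 0]) => [/existsP[j h]|h]; first by exists j.
    exfalso; move: u1; rewrite big1; first by move/eqP; rewrite eq_sym oner_eq0.
    move=> k _.
    have -> : u k 0 = 0.
      by apply/eqP; apply: contraNT h => h'; apply/existsP; exists k.
    by rewrite expr0n.
  have Ajj : A j j = 0.
    have := congr1 (fun M : 'cV[R]_n => M j 0) Au0; rewrite !mxE => h0.
    have h1 := psumr_eq0P (fun l _ => mulr_ge0 (Anng j l) (u0 l 0)) h0.
    have := h1 j isT; move=> /eqP.
    by rewrite mulf_eq0 (negbTE uj) orbF => /eqP.
  have AjjE : A j j = \sum_k BC j k * B j k.
    by rewrite AE mxE; apply: eq_bigr => k _; rewrite [B^T k j]mxE.
  have hX : forall k, BC j k * B j k = 0.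
    have h1 := psumr_eq0P (fun l _ => mulr_ge0 (BC0 j l) (B0 j l))
                          (etrans (esym AjjE) Ajj).
    by move=> k; apply: h1.
  have hW : forall k l, B j k * B j l * C k l = 0.
    move=> k l; have := hX k; rewrite /BC mxE mulr_suml => h1.
    have h2 := psumr_eq0P (fun m _ => mulr_ge0 (mulr_ge0 (B0 j m) (C0 m k)) (B0 j k)) h1.
    have := h2 l isT.
    have -> : B j l * C l k * B j k = B j k * B j l * C k l by rewrite HC'; ring.
    by [].
  pose X : 'M[R]_(n, r) := \matrix_(i, k) if i == j then BC j k else 0.
  pose W : 'M[R]_r := \matrix_(k, l) (B j k * B j l).
  have [_ HW] : X = 0 /\ W = 0.
    apply: (Hyp X W).
    - by move=> a b; rewrite mxE; case: eqP.
    - by move=> a b; rewrite mxE; apply: mulr_ge0.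
    - by apply/matrixP => a b; rewrite !mxE mulrC.
    - apply/matrixP => a b; rewrite !mxE; case: (eqVneq a j) => [->|h'].
        by have := hX b; rewrite /BC mxE.
      by rewrite mul0r.
    - by apply/matrixP => a b; rewrite !mxE hW.
    - apply/matrixP => a b; rewrite !mxE.
      transitivity (B j a * BC j b).
        rewrite /BC mxE mulr_sumr; apply: eq_bigr => m _; rewrite mxE; ring.
      rewrite (bigD1 j) //= big1 ?addr0; first by rewrite !mxE eqxx.
      by move=> i /negbTE hi; rewrite !mxE hi mulr0.
  have [k hk] := Brow j.
  have := congr1 (fun M : 'M[R]_r => M k k) HW; rewrite !mxE => /eqP.
  by rewrite mulf_eq0 orbb (negbTE hk).
have rhopos : 0 < rho by rewrite lt0r rhonz rho0.
pose w := C *m (B^T *m u).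
have uE : u = rho^-1 *: (B *m w).
  have h : B *m w = rho *: u by rewrite /w !mulmxA -/BC -AE Au.
  by rewrite h scalerA mulVf // scale1r.
pose P := w *m w^T.
have Psym : P^T = P by rewrite /P trmx_mul trmxK.
have uuE : u *m u^T = rho^-2 *: (B *m P *m B^T).
  rewrite {1}uE {1}uE linearZ /= -scalemxAl -scalemxAr scalerA -invfM -expr2.
  by rewrite trmx_mul /P !mulmxA.
have [H [HB HC]] := @gordan_app R n r B C B0 C0 Csym Hyp.
pose S := \sum_i \sum_j `|H i j|.
have S0 : 0 <= S := @S_ge0 R r H.
pose F (e : R) := 1%:M - e *: H.
pose d0 : R := 1 / (2 * S + 1).
have d00 : 0 < d0 by rewrite /d0 divr_gt0 //; lra.
have hd0 : forall e, 0 < e -> e < d0 -> e * S <= 1 / 2.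
  move=> e e0; rewrite /d0 ltr_pdivlMr; last lra.
  move=> h; nra.
have HBev : ev (fun e => forall p : 'I_n * 'I_r, 0 < (B *m invmx (F e)) p.1 p.2).
  apply: ev_fin => -[i k] /=.
  pose K := 2 * \sum_l `|(B *m H *m H) i l|.
  apply: (@ev_pos R (B i k) ((B *m H) i k) K d0
            (fun e => (B *m invmx (F e)) i k) d00).
    have := B0 i k; rewrite le_eqVlt => /orP[/eqP Bik|]; last by left.
    by right; split; [rewrite -Bik | apply: HB; rewrite -Bik].
  move=> e e0 ed; have eS := hd0 e e0 ed.
  have U := @inv_unit R r H e (ltW e0) eS.
  rewrite /= (@B'_exp R n r B H (invmx (F e)) e (@inv_GE R r H e U)).
  have E : forall M1 M2 M3 : 'M[R]_(n, r),
      (M1 + e *: M2 + e ^+ 2 *: M3) i k = M1 i k + e * M2 i k + e ^+ 2 * M3 i k.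
    by move=> *; rewrite !mxE.
  rewrite E.
  set X := (B *m H *m H *m invmx (F e)) i k.
  have -> : B i k + e * (B *m H) i k + e ^+ 2 * X - (B i k + (B *m H) i k * e) =
            e ^+ 2 * X by ring.
  have e20 : 0 <= e ^+ 2 by rewrite exprn_ge0 // ltW.
  rewrite normrM (ger0_norm e20) mulrC; apply: ler_wpM2r => //.
  rewrite /X mxE /K mulr_sumr; apply: le_trans (ler_norm_sum _ _ _) _.
  apply: ler_sum => l _; rewrite normrM mulrC; apply: ler_wpM2r; first exact: normr_ge0.
  exact: (@inv_bound R r H e (ltW e0) eS).
pose C' (e : R) := F e *m (C - e ^+ 2 *: P) *m (F e)^T.
have HCev : ev (fun e => forall p : 'I_r * 'I_r, 0 < C' e p.1 p.2).
  apply: ev_fin => -[k l] /=.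
  pose K := `|(H *m C *m H^T - P) k l| + `|(H *m P + P *m H^T) k l| +
            `|(- (H *m P *m H^T)) k l|.
  apply: (@ev_pos R (C k l) (- (H *m C + C *m H^T) k l) K 1
            (fun e => C' e k l) ltr01).
    have := C0 k l; rewrite le_eqVlt => /orP[/eqP Ckl|]; last by left.
    by right; split; [rewrite -Ckl | apply: HC; rewrite -Ckl].
  move=> e e0 e1; rewrite /= /C' /F C'_exp.
  have E : forall M0 M1 M2 M3 M4 : 'M[R]_r,
      (M0 + e *: - M1 + e ^+ 2 *: (M2 + e *: M3 + e ^+ 2 *: M4)) k l =
      M0 k l + e * - M1 k l + e ^+ 2 * (M2 k l + e * M3 k l + e ^+ 2 * M4 k l).
    by move=> *; rewrite !mxE.
  rewrite E.
  set y2 := (H *m C *m H^T - P) k l.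
  set y3 := (H *m P + P *m H^T) k l.
  set y4 := (- (H *m P *m H^T)) k l.
  set c1 := (H *m C + C *m H^T) k l.
  have -> : C k l + e * - c1 + e ^+ 2 * (y2 + e * y3 + e ^+ 2 * y4) -
            (C k l + - c1 * e) = e ^+ 2 * (y2 + e * y3 + e ^+ 2 * y4) by ring.
  have e20 : 0 <= e ^+ 2 by rewrite exprn_ge0 // ltW.
  rewrite normrM (ger0_norm e20) mulrC; apply: ler_wpM2r => //.
  have h3 : `|e * y3| <= `|y3|.
    rewrite normrM (ger0_norm (ltW e0)); have := normr_ge0 y3; nra.
  have h4 : `|e ^+ 2 * y4| <= `|y4|.
    rewrite normrM (ger0_norm e20); have := normr_ge0 y4.
    have : e ^+ 2 <= 1 by rewrite expr2; nra.
    nra.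
  apply: le_trans (ler_normD _ _) _; rewrite /K.
  have := ler_normD y2 (e * y3); lra.
have r1 : 0 < 1 / (rho + 1) by rewrite divr_gt0 //; lra.
have [d dpos Hd] := ev_and (ev_and HBev HCev)
   (ev_and (ev_lt d00) (ev_and (@ev_lt R 1 ltr01) (ev_lt r1))).
pose e := d / 2.
have e0 : 0 < e by rewrite /e divr_gt0.
have ed : e < d by rewrite /e; lra.
have [[HBe HCe] [ed0 [e1 erho]]] := Hd e e0 ed.
have eS := hd0 e e0 ed0.
have U := @inv_unit R r H e (ltW e0) eS.
pose alpha := rho ^+ 2 * e ^+ 2.
have apos : 0 < alpha by rewrite /alpha mulr_gt0 // exprn_gt0.
have arho : alpha < rho.
  move: erho; rewrite ltr_pdivlMr; last lra.
  move=> h.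
  have h1 : rho * e < 1 by nra.
  have h2 : rho * e * e < 1.
    have : rho * e * e <= rho * e.
      by apply: ler_piMr; [rewrite mulr_ge0 // ltW | exact: ltW].
    lra.
  have -> : alpha = rho * (rho * e * e) by rewrite /alpha !expr2; ring.
  by rewrite gtr_pMr.
apply: (Hbd alpha apos).
set A' := A - alpha *: (u *m u^T).
pose B1 := B *m invmx (F e).
pose C1 := C' e.
have B1nn : nonneg_mx B1 by move=> i k; apply: ltW; apply: (HBe (i, k)).
have C1nn : nonneg_mx C1 by move=> i k; apply: ltW; apply: (HCe (i, k)).
have C1sym : C1^T = C1.
  rewrite /C1 /C' !trmx_mul trmxK mulmxA [(C - _)^T]linearB /= linearZ /=.
  by rewrite Csym Psym.
have A'E : A' = B1 *m C1 *m B1^T.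
  have GF : invmx (F e) *m F e = 1%:M by rewrite mulVmx.
  have FtGt : (F e)^T *m (invmx (F e))^T = 1%:M by rewrite -trmx_mul GF trmx1.
  have -> : B1 *m C1 *m B1^T = B *m (invmx (F e) *m F e) *m (C - e ^+ 2 *: P) *m
              ((F e)^T *m (invmx (F e))^T) *m B^T.
    by rewrite /B1 /C1 /C' trmx_mul !mulmxA.
  rewrite GF FtGt !mulmx1 mulmxBr mulmxBl -scalemxAr -scalemxAl -AE.
  rewrite /A' uuE scalerA; congr (_ - _ *: _); rewrite /alpha; field.
  by rewrite rhonz.
have A'sym : A'^T = A'.
  by rewrite /A' linearB /= linearZ /= trmx_mul trmxK Asym.
have rkA' : \rank A' = r.
  apply/eqP; rewrite eqn_leq; apply/andP; split.
    by rewrite A'E; apply: leq_trans (mxrankM_maxl _ _) _; exact: rank_leq_col.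
  rewrite -{1}rkA; apply: mxrankS.
  have utu : u^T *m u = 1%:M.
    apply/matrixP => a b; rewrite !mxE (ord1 a) (ord1 b) /= -u1.
    by apply: eq_bigr => k _; rewrite mxE expr2.
  have A'u : A' *m u = (rho - alpha) *: u.
    by rewrite /A' mulmxBl Au -scalemxAl -mulmxA utu mulmx1 scalerBl.
  have ral : rho - alpha != 0 by rewrite subr_eq0 gt_eqF.
  have utA : u^T *m A' = (rho - alpha) *: u^T.
    by rewrite -{1}A'sym -trmx_mul A'u linearZ.
  have uut : u *m u^T = ((rho - alpha)^-1 *: (u *m u^T)) *m A'.
    by rewrite -scalemxAl -mulmxA utA -scalemxAr scalerA mulVf // scale1r.
  have -> : A = A' + alpha *: (u *m u^T) by rewrite /A' subrK.
  apply: addmx_sub; first exact: submx_refl.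
  by rewrite uut scalemxAl; apply: submxMl.
split.
  split; first exact: A'sym.
  by rewrite A'E; apply: nn_mul; [apply: nn_mul|apply: nn_tr].
split.
  by rewrite rkA'; exists B1, C1; split => //; split => //; split.
move=> k' [B2 [C2 [_ [_ E2]]]]; rewrite E2.
by apply: leq_trans (mxrankM_maxl _ _) _; exact: rank_leq_col.
Qed.
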